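(* Let $n\geq 2$ and $q=2^m\geq 4$. Let $B_n\in\mathrm{GL}_{n+1}(\mathbb{F}_q)$ be the matrix $E_{1,2}+E_{2,3}+\cdots+E_{n,n+1}+E_{n+1,1}$, where $E_{i,j}$ is the $(n+1)\times(n+1)$ matrix with $1$ in entry $(i,j)$ and $0$ elsewhere. Then the permutation of $\mathbb{P}^n(\mathbb{F}_q)$ induced by $B_n$ (acting on column vectors of homogeneous coordinates) is even. *)

(* Defs.v *)
From HB Require Import structures.
From mathcomp Require Import all_boot all_order all_algebra all_fingroup all_field.
Set Implicit Arguments. Unset Strict Implicit. Unset Printing Implicit Defensive.
Import GRing.Theory.
Local Open Scope ring_scope.

Definition pline (F : finFieldType) (k : nat) (v : 'cV[F]_k) : {set 'cV[F]_k} :=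
  [set c *: v | c : F].

Definition is_ppoint (F : finFieldType) (k : nat) (L : {set 'cV[F]_k}) : bool :=
  [exists v : 'cV[F]_k, (v != 0) && (L == pline v)].

(* The projective space P^{k-1}(F), as a finite type. *)
Definition proj_space (F : finFieldType) (k : nat) : finType :=
  {L : {set 'cV[F]_k} | is_ppoint L}.

(* The matrix B_n = E_{1,2} + E_{2,3} + ... + E_{n,n+1} + E_{n+1,1} of size
   (n+1) x (n+1); with 0-based indices, entry (i,j) is 1 iff j = i+1 mod (n+1). *)
Definition Bmx (F : finFieldType) (n : nat) : 'M[F]_(n.+1) :=
  \matrix_(i < n.+1, j < n.+1) (if (j : nat) == (i.+1 %% n.+1)%N then 1 else 0).

Definition induced_by (F : finFieldType) (k : nat) (A : 'M[F]_k)
    (s : {perm proj_space F k}) : Prop :=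
  forall L : proj_space F k, val (s L) = (fun v => A *m v) @: val L.

(* Main.v *)
Require Import Defs.
From HB Require Import structures.
From mathcomp Require Import all_boot all_order all_algebra all_fingroup all_field.
Set Implicit Arguments. Unset Strict Implicit. Unset Printing Implicit Defensive.
Import GRing.Theory.
Local Open Scope ring_scope.

Definition pv (F : finFieldType) (k : nat) (s : {perm 'I_k}) (v : 'cV[F]_k) : 'cV[F]_k :=
  \col_i v (s i) 0.

Lemma pvZ (F : finFieldType) (k : nat) (s : {perm 'I_k}) (c : F) v :
  pv s (c *: v) = c *: pv s v.
Proof. by apply/matrixP => i j; rewrite !mxE. Qed.

Lemma pvM (F : finFieldType) (k : nat) (s t : {perm 'I_k}) (v : 'cV[F]_k) :
  pv s (pv t v) = pv (s * t)%g v.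
Proof. by apply/matrixP => i j; rewrite !mxE permM. Qed.

Lemma pv1 (F : finFieldType) (k : nat) (v : 'cV[F]_k) : pv 1%g v = v.
Proof. by apply/matrixP => i j; rewrite !mxE perm1 (ord1 j). Qed.

Lemma pv_eq0 (F : finFieldType) (k : nat) (s : {perm 'I_k}) (v : 'cV[F]_k) :
  (pv s v == 0) = (v == 0).
Proof.
apply/eqP/eqP => [h|->]; last by apply/matrixP => i j; rewrite !mxE.
apply/matrixP => i j; rewrite (ord1 j) mxE.
have := congr1 (fun M : 'cV[F]_k => M (s^-1 i)%g 0) h.
by rewrite !mxE permKV.
Qed.

Lemma pline_img (F : finFieldType) (k : nat) (f : 'cV[F]_k -> 'cV[F]_k) v :
  (forall (c : F) u, f (c *: u) = c *: f u) -> f @: pline v = pline (f v).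
Proof. by move=> hf; rewrite /pline -imset_comp; apply: eq_imset => c /=; rewrite hf. Qed.

Lemma pv_ppoint (F : finFieldType) (k : nat) (s : {perm 'I_k}) (L : {set 'cV[F]_k}) :
  is_ppoint L -> is_ppoint (pv s @: L).
Proof.
case/existsP => v /andP [v0 /eqP ->].
apply/existsP; exists (pv s v); rewrite pv_eq0 v0 /=.
by rewrite (pline_img _ (@pvZ F k s)).
Qed.

Definition pact (F : finFieldType) (k : nat) (s : {perm 'I_k}) (L : proj_space F k) :
  proj_space F k := exist _ (pv s @: val L) (pv_ppoint s (valP L)).

Lemma pactM (F : finFieldType) (k : nat) (s t : {perm 'I_k}) (L : proj_space F k) :
  pact s (pact t L) = pact (s * t)%g L.
Proof.
apply: val_inj => /=; rewrite -imset_comp; apply: eq_imset => v /=; exact: pvM.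
Qed.

Lemma pact1 (F : finFieldType) (k : nat) (L : proj_space F k) : pact 1%g L = L.
Proof.
apply: val_inj => /=; rewrite -[RHS]imset_id; apply: eq_imset => v /=; exact: pv1.
Qed.

Lemma pactK (F : finFieldType) (k : nat) (s : {perm 'I_k}) :
  cancel (@pact F k s) (pact s^-1%g).
Proof. by move=> L; rewrite pactM mulVg pact1. Qed.

Definition Phi (F : finFieldType) (k : nat) (s : {perm 'I_k}) : {perm proj_space F k} :=
  perm (can_inj (@pactK F k s)).

Lemma PhiE (F : finFieldType) (k : nat) (s : {perm 'I_k}) L : Phi F s L = pact s L.
Proof. by rewrite permE. Qed.

Lemma PhiM (F : finFieldType) (k : nat) (s t : {perm 'I_k}) :
  Phi F (s * t)%g = (Phi F t * Phi F s)%g.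
Proof. by apply/permP => L; rewrite permM !PhiE pactM. Qed.

Lemma Phi1 (F : finFieldType) (k : nat) : Phi F (1%g : {perm 'I_k}) = 1%g.
Proof. by apply/permP => L; rewrite perm1 PhiE pact1. Qed.

Lemma Phi_even (F : finFieldType) (k : nat) :
  (forall x y : 'I_k, x != y -> odd_perm (Phi F (tperm x y)) = false) ->
  forall s : {perm 'I_k}, odd_perm (Phi F s) = false.
Proof.
move=> ht s; case: (prod_tpermP s) => ts -> {s}.
elim: ts => [|t ts IH] /=; first by rewrite big_nil Phi1 odd_perm1.
case/andP => dt dts; rewrite big_cons PhiM odd_permM IH // ht //.
Qed.
Definition fib (F : finFieldType) (k : nat) (x y : 'I_k) (c : F) : {set 'cV[F]_k} :=
  [set w : 'cV[F]_k | w x 0 + w y 0 == c].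

Lemma fib_le (F : finFieldType) (k : nat) (x y : 'I_k) (c c' : F) :
  x != y -> (#|fib x y c| <= #|fib x y c'|)%N.
Proof.
move=> xy.
have <- : #|(fun w => w + (c' - c) *: delta_mx y 0) @: fib x y c| = #|fib x y c|.
  by apply: card_imset => w1 w2 /addIr.
apply: subset_leq_card; apply/subsetP => w /imsetP [u]; rewrite !inE => /eqP hu ->.
rewrite !mxE eqxx (negbTE xy) /= eqxx mulr0 mulr1 addr0.
by rewrite addrA hu addrC subrK.
Qed.

Lemma fib_card (F : finFieldType) (k : nat) (x y : 'I_k) :
  x != y -> (#|F| * #|fib x y (1%R : F)| = #|F| ^ k)%N.
Proof.
move=> xy.
have := card_mx F k 1; rewrite muln1 => <-.
have E : (#|{: 'cV[F]_k}| = \sum_(c : F) #|fib x y c|)%N.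
  rewrite -sum1_card (partition_big (fun w : 'cV[F]_k => w x 0 + w y 0) xpredT) //=.
  apply: eq_bigr => c _; rewrite -sum1_card; apply: eq_bigl => w; rewrite !inE.
  by [].
rewrite E (eq_bigr (fun _ => #|fib x y (1%R : F)|)).
  by rewrite sum_nat_const.
move=> c _; apply/eqP; rewrite eqn_leq; apply/andP; split; apply: fib_le => //.
Qed.
Lemma card_even (F : finFieldType) : 2%N \in [pchar F] -> (2 %| #|F|)%N.
Proof.
move=> h.
have := card_pprimeChar h. move=> E.
have -> : #|F| = #|pPrimeCharType h| by [].
rewrite E. move: E. set m := (X in (2 ^ X)%N). clearbody m.
case: m => [|m] E; last by rewrite expnS dvdn_mulr.
have := finNzRing_gt1 F. by rewrite -[#|F|]/#|pPrimeCharType h| E.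
Qed.
Lemma inv_odd_aux (T : finType) (M : nat) : forall (m : nat) (hm : (m <= M)%N) (t : {perm T}),
  (forall z, t (t z) = z) -> #|[set z | t z != z]| = m ->
  odd_perm t = odd m./2.
Proof.
elim: M => [|M IH] m hm t ht hc.
  move: hm; rewrite leqn0 => /eqP m0; rewrite m0 in hc *.
  have -> : t = 1%g.
    apply/permP => z; rewrite perm1; apply/eqP; apply/negPn/negP => hz.
    have : (0 < #|[set z | t z != z]|)%N by apply/card_gt0P; exists z; rewrite inE.
    by rewrite hc.
  by rewrite odd_perm1.
case: (pickP (fun z => t z != z)) => [a ha | hnone]; last first.
  have -> : t = 1%g.
    by apply/permP => z; rewrite perm1; apply/eqP; move: (hnone z) => /= /negbFE.
  rewrite odd_perm1.
  have : m = 0%N by rewrite -hc; apply/eqP; rewrite cards_eq0; apply/eqP/setP => z; rewrite !inE hnone.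
  by move=> ->.
set b := t a.
have hab : a != b by rewrite eq_sym.
set t' := (t * tperm a b)%g.
have ht'a : forall z, z != a -> z != b -> t' z = t z.
  move=> z za zb; rewrite permM; apply: tpermD.
    by apply: contraNneq zb => E; rewrite -(ht z) -E.
  by apply: contraNneq za => E; rewrite -(ht z) -E /b ht.
have eqt : t = (t' * tperm a b)%g by rewrite -mulgA tperm2 mulg1.
have ht' : forall z, t' (t' z) = z.
  move=> z; case: (eqVneq z a) => [->|za].
    by rewrite !permM /b !tpermR.
  case: (eqVneq z b) => [->|zb].
    by rewrite !permM /b ht tpermL ht tpermL.
  have tza : t z != a by apply: contraNneq zb => E; rewrite -(ht z) E.
  have tzb : t z != b by apply: contraNneq za => E; rewrite -(ht z) E ht.
  by rewrite (ht'a z za zb) (ht'a _ tza tzb) ht.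
have hc' : #|[set z | t' z != z]| = (m - 2)%N.
  have -> : [set z | t' z != z] = [set z | t z != z] :\ a :\ b.
    apply/setP => z; rewrite !inE.
    case: (eqVneq z b) => [->|zb] /=.
      by rewrite !permM /b ht tpermL eqxx.
    case: (eqVneq z a) => [->|za] /=.
      by rewrite !permM /b tpermR eqxx.
    by rewrite ht'a.
  have hb : b \in [set z | t z != z] :\ a by rewrite !inE eq_sym hab /b ht eq_sym.
  move: hc; rewrite (cardsD1 a) (cardsD1 b ([set z | t z != z] :\ a)) hb inE ha.
  by move=> <-; rewrite /= !add1n subn2.
have m2 : (2 <= m)%N.
  have hb : b \in [set z | t z != z] :\ a by rewrite !inE eq_sym hab /b ht eq_sym.
  by rewrite -hc (cardsD1 a) (cardsD1 b ([set z | t z != z] :\ a)) hb inE ha.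
rewrite eqt odd_permM odd_tperm hab (IH (m - 2)%N) //; last by rewrite leq_subLR; apply: (leq_trans hm); rewrite add2n leqnSn.
move: m2; case: m {hm hc hc'} => [|[|m]] //= _.
by rewrite subn2 /= addbT.
Qed.

Lemma pline_mem (F : finFieldType) (k : nat) (v : 'cV[F]_k) : v \in pline v.
Proof. by apply/imsetP; exists 1; rewrite ?inE ?scale1r. Qed.

Lemma pline_eq (F : finFieldType) (k : nat) (u v : 'cV[F]_k) :
  pline u = pline v -> exists c : F, u = c *: v.
Proof.
move=> h; have := pline_mem u; rewrite h => /imsetP [c _ ->]; by exists c.
Qed.

Lemma pline_scale (F : finFieldType) (k : nat) (c : F) (v : 'cV[F]_k) :
  c != 0 -> pline (c *: v) = pline v.
Proof.
move=> c0; apply/setP => u; apply/imsetP/imsetP => [[d _ ->]|[d _ ->]].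
  by exists (d * c); rewrite ?inE // scalerA.
by exists (d / c); rewrite ?inE // scalerA mulfVK.
Qed.

Lemma pline_pt (F : finFieldType) (k : nat) (v : 'cV[F]_k) :
  v != 0 -> is_ppoint (pline v).
Proof. by move=> v0; apply/existsP; exists v; rewrite v0 eqxx. Qed.

Lemma key (F : finFieldType) (k : nat) (x y : 'I_k) :
  x != y -> 2%N \in [pchar F] ->
  #|[set L : proj_space F k | Phi F (tperm x y) L != L]| = #|fib x y (1%R : F)|.
Proof.
move=> xy h2.
have d0 : (delta_mx x 0 : 'cV[F]_k) != 0.
  apply/eqP => /matrixP /(_ x 0); rewrite !mxE !eqxx /= => /eqP; by rewrite oner_eq0.
pose p0 : proj_space F k := exist (fun L => is_ppoint L) _ (pline_pt d0).
pose g w : proj_space F k := insubd p0 (pline w).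
have gE : forall w, w != 0 -> val (g w) = pline w.
  by move=> w w0; rewrite /g insubdK //; apply: pline_pt.
have wnz : forall w, w \in fib x y (1%R : F) -> w != 0.
  move=> w; rewrite inE; apply: contraTneq => ->; rewrite !mxE addr0 eq_sym oner_eq0 //.
have two : forall a : F, a + a = 0.
  by move=> a; rewrite -mulr2n -mulr_natr (pcharf0 h2) mulr0.
rewrite -(@card_in_imset _ _ g (fib x y 1%R)); last first.
  move=> w1 w2 h1 h2' /(congr1 val); rewrite !gE ?wnz // => /pline_eq [c hc].
  subst w1; move: h1; rewrite inE !mxE -mulrDr.
  move: h2'; rewrite inE => /eqP ->; rewrite mulr1 => /eqP c1.
  by rewrite c1 scale1r.
apply: eq_card => L; rewrite inE; apply/idP/imsetP.
  move=> hL; case/existsP: (valP L) => v /andP [v0 /eqP hv].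
  set s := v x 0 + v y 0.
  have s0 : s != 0.
    apply/negP => /eqP s0; move: hL; apply/negP; rewrite negbK; apply/eqP/val_inj.
    rewrite PhiE /= hv (pline_img _ (@pvZ F k _)); congr pline.
    have vxy : v x 0 = v y 0 by apply/eqP; rewrite -subr_eq0 (oppr_pchar2 h2) -/s s0.
    apply/matrixP => i j; rewrite (ord1 j) mxE.
    by case: tpermP => [->|->|]; rewrite ?vxy.
  exists (s^-1 *: v).
    by rewrite inE !mxE -mulrDr mulVf.
  apply: val_inj; rewrite gE ?scaler_eq0 ?invr_eq0 ?negb_or ?s0 ?v0 //.
  by rewrite pline_scale ?invr_eq0.
case=> w hw ->; apply/negP => /eqP /(congr1 val).
rewrite PhiE /= gE ?wnz // (pline_img _ (@pvZ F k _)) => /pline_eq [c hc].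
have ex := congr1 (fun M : 'cV[F]_k => M x 0) hc.
have ey := congr1 (fun M : 'cV[F]_k => M y 0) hc.
move: ex ey; rewrite /= !mxE tpermL tpermR => ex ey.
move: (hw); rewrite inE => /eqP hw1.
have c1 : c = 1.
  have e : c * (w x 0 + w y 0) = w y 0 + w x 0 by rewrite mulrDr -ex -ey.
  by move: e; rewrite [w y 0 + _]addrC hw1 mulr1.
move: hw1; rewrite ey c1 mul1r two => /eqP; by rewrite eq_sym oner_eq0.
Qed.

From mathcomp Require Import zify.
Lemma arith (q n : nat) : (2 %| q)%N -> (2 <= n)%N -> odd (q ^ n)./2 = false.
Proof.
move=> /dvdnP [r ->]; case: n => [|[|n]] // _.
have -> : ((r * 2) ^ n.+2 = (((r * 2) ^ n * r * r) * 2) * 2)%N.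
  rewrite !expnS. set a := ((r * 2) ^ n)%N. lia.
by rewrite [X in X./2]muln2 doubleK oddM andbF.
Qed.

Lemma tperm_even (F : finFieldType) (n : nat) (x y : 'I_n.+1) :
  (2 <= n)%N -> 2%N \in [pchar F] -> x != y ->
  odd_perm (Phi F (tperm x y)) = false.
Proof.
move=> hn h2 xy.
rewrite (@inv_odd_aux _ _ _ (leqnn _) (Phi F (tperm x y)) _ erefl); last first.
  by move=> L; rewrite !PhiE pactM tperm2 pact1.
rewrite key //.
have hf := fib_card F xy.
have : #|fib x y (1%R : F)| = (#|F| ^ n)%N.
  apply/eqP; rewrite -(eqn_pmul2l (ltnW (finNzRing_gt1 F))) hf expnS //.
move=> ->.
by apply: arith => //; apply: card_even.
Qed.

Definition shift (n : nat) : {perm 'I_n.+1} := perm (can_inj (@ordSK n.+1)).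

Lemma Bmx_pv (F : finFieldType) (n : nat) (v : 'cV[F]_n.+1) :
  Bmx F n *m v = pv (shift n) v.
Proof.
apply/matrixP => i j; rewrite !mxE (ord1 j) permE.
rewrite (bigD1 (ordS i)) //= mxE eqxx mul1r big1 ?addr0 //.
move=> l hl; rewrite mxE.
have -> : ((l : nat) == i.+1 %% n.+1)%N = false.
  by apply/negbTE; move: hl; apply: contra => /eqP h; apply/eqP/val_inj.
by rewrite mul0r.
Qed.

Unset Implicit Arguments.
Set Strict Implicit.

Theorem lemma3p3 (F : finFieldType) (n : nat)
    (hn : (2 <= n)%N) (hchar : 2%N \in [pchar F]) (hq : (4 <= #|F|)%N) :
  exists s : {perm proj_space F n.+1},
    induced_by (Bmx F n) s /\ odd_perm s = false.
Proof.
exists (Phi F (shift n)); split.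
  move=> L; rewrite PhiE /=; apply: eq_imset => v; by rewrite Bmx_pv.
apply: Phi_even => x y xy; exact: tperm_even.
Qed.
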